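(* Let $M^2$ be a surface in $\mathbb{R}^4$ free of flat points. Then $M^2$ has flat normal connection (the curvature of its normal connection vanishes identically) if and only if at each point of $M^2$ the tangent indicatrix $\chi$ is a rectangular hyperbola (a Lorentz circle), i.e. the principal normal curvatures satisfy $\nu''=-\nu'\neq 0$.
   Context: Let $M^2: z=z(u,v)$ be a regular surface in $\mathbb{R}^4$ with first fundamental form $I=E\,du^2+2F\,du\,dv+G\,dv^2$, $W=\sqrt{EG-F^2}$. Choose an orthonormal normal frame $\{e_1,e_2\}$ with $\{z_u,z_v,e_1,e_2\}$ positively oriented, write $\sigma(z_u,z_u)=c_{11}^1e_1+c_{11}^2e_2$, $\sigma(z_u,z_v)=c_{12}^1e_1+c_{12}^2e_2$, $\sigma(z_v,z_v)=c_{22}^1e_1+c_{22}^2e_2$ ($\sigma$ the second fundamental form), and set $L=\frac{2}{W}(c_{11}^1c_{12}^2-c_{12}^1c_{11}^2)$, $M=\frac{1}{W}(c_{11}^1c_{22}^2-c_{22}^1c_{11}^2)$, $N=\frac{2}{W}(c_{12}^1c_{22}^2-c_{22}^1c_{12}^2)$. A point is flat if $L=M=N=0$; ''free of flat points'' means $(L,M,N)\ne(0,0,0)$ everywhere. At each point, the principal normal curvatures $\nu',\nu''$ are the two roots of $(EG-F^2)\nu^2-(EN+GL-2FM)\nu+(LN-M^2)=0$ (the eigenvalues of $II=L\lambda^2+2M\lambda\mu+N\mu^2$ relative to $I$), with corresponding $I$-orthogonal principal directions. The tangent indicatrix $\chi$ at $p$ is the conic in $T_pM^2$ given, in Cartesian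 coordinates $(X,Y)$ with respect to an orthonormal basis of principal directions, by $\nu'X^2+\nu''Y^2=\varepsilon$, $\varepsilon=\pm1$. *)

(* Defs.v *)
From Stdlib Require Import Reals List.
From Coquelicot Require Import Coquelicot.
Open Scope R_scope.

(** Vectors of R^4: only the components 0,1,2,3 are ever used. *)
Definition V4 := nat -> R.

Definition dot (a b : V4) : R := a 0%nat * b 0%nat + a 1%nat * b 1%nat
  + a 2%nat * b 2%nat + a 3%nat * b 3%nat.

Definition m2 (a b : V4) (i j : nat) : R := a i * b j - a j * b i.

(** det of the 4x4 matrix with columns a b c d (Laplace expansion along the
    first two columns). *)
Definition det4 (a b c d : V4) : R :=
    m2 a b 0 1 * m2 c d 2 3 - m2 a b 0 2 * m2 c d 1 3
  + m2 a b 0 3 * m2 c d 1 2 + m2 a b 1 2 * m2 c d 0 3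
  - m2 a b 1 3 * m2 c d 0 2 + m2 a b 2 3 * m2 c d 0 1.

Definition pu (f : R -> R -> R) : R -> R -> R :=
  fun u v => Derive (fun t => f t v) u.
Definition pv (f : R -> R -> R) : R -> R -> R :=
  fun u v => Derive (fun t => f u t) v.

Definition Pu (z : R -> R -> V4) : R -> R -> V4 :=
  fun u v i => pu (fun a b => z a b i) u v.
Definition Pv (z : R -> R -> V4) : R -> R -> V4 :=
  fun u v i => pv (fun a b => z a b i) u v.

Fixpoint dpart (l : list bool) (f : R -> R -> R) : R -> R -> R :=
  match l with
  | nil => f
  | b :: l' => if b then pu (dpart l' f) else pv (dpart l' f)
  end.

Definition smooth (D : R -> R -> Prop) (f : R -> R -> R) : Prop :=
  forall (l : list bool) (u v : R), D u v ->
    ex_derive (fun t => dpart l f t v) u /\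
    ex_derive (fun t => dpart l f u t) v /\
    continuous (fun p : R * R => dpart l f (fst p) (snd p)) (u, v).

Definition smoothV (D : R -> R -> Prop) (z : R -> R -> V4) : Prop :=
  forall i : nat, (i < 4)%nat -> smooth D (fun u v => z u v i).

Definition open_dom (D : R -> R -> Prop) : Prop :=
  open (fun p : R * R => D (fst p) (snd p)).

Definition EE z u v := dot (Pu z u v) (Pu z u v).
Definition FF z u v := dot (Pu z u v) (Pv z u v).
Definition GG z u v := dot (Pv z u v) (Pv z u v).
Definition WW z u v := sqrt (EE z u v * GG z u v - FF z u v ^ 2).

Definition regular (D : R -> R -> Prop) (z : R -> R -> V4) : Prop :=
  forall u v, D u v -> EE z u v * GG z u v - FF z u v ^ 2 > 0.

Definition normal_frame (D : R -> R -> Prop) (z e1 e2 : R -> R -> V4) : Prop :=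
  forall u v, D u v ->
    dot (e1 u v) (e1 u v) = 1 /\ dot (e2 u v) (e2 u v) = 1 /\
    dot (e1 u v) (e2 u v) = 0 /\
    dot (e1 u v) (Pu z u v) = 0 /\ dot (e1 u v) (Pv z u v) = 0 /\
    dot (e2 u v) (Pu z u v) = 0 /\ dot (e2 u v) (Pv z u v) = 0 /\
    det4 (Pu z u v) (Pv z u v) (e1 u v) (e2 u v) > 0.

(** Coefficients of the second fundamental form:
    sigma(z_u,z_u) = c11^1 e1 + c11^2 e2, etc.  (c^k_ij = <z_ij, e_k>). *)
Definition c11 z (e : R -> R -> V4) u v := dot (Pu (Pu z) u v) (e u v).
Definition c12 z (e : R -> R -> V4) u v := dot (Pv (Pu z) u v) (e u v).
Definition c22 z (e : R -> R -> V4) u v := dot (Pv (Pv z) u v) (e u v).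

Definition LL z e1 e2 u v :=
  2 / WW z u v * (c11 z e1 u v * c12 z e2 u v - c12 z e1 u v * c11 z e2 u v).
Definition MM z e1 e2 u v :=
  1 / WW z u v * (c11 z e1 u v * c22 z e2 u v - c22 z e1 u v * c11 z e2 u v).
Definition NN z e1 e2 u v :=
  2 / WW z u v * (c12 z e1 u v * c22 z e2 u v - c22 z e1 u v * c12 z e2 u v).

Definition free_of_flat_points (D : R -> R -> Prop) (z e1 e2 : R -> R -> V4)
  : Prop :=
  forall u v, D u v ->
    ~ (LL z e1 e2 u v = 0 /\ MM z e1 e2 u v = 0 /\ NN z e1 e2 u v = 0).

Definition principal_normal_curvatures (z e1 e2 : R -> R -> V4) (u v nu1 nu2 : R)
  : Prop :=
  let E := EE z u v in let F := FF z u v in let G := GG z u v in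
  let L := LL z e1 e2 u v in let M := MM z e1 e2 u v in
  let N := NN z e1 e2 u v in
  forall nu : R,
    (E * G - F ^ 2) * nu ^ 2 - (E * N + G * L - 2 * F * M) * nu
      + (L * N - M ^ 2)
    = (E * G - F ^ 2) * (nu - nu1) * (nu - nu2).

(** Tangent indicatrix nu' X^2 + nu'' Y^2 = eps is a rectangular hyperbola
    (Lorentz circle): nu'' = - nu' <> 0. *)
Definition indicatrix_rectangular_hyperbola (z e1 e2 : R -> R -> V4) (u v : R)
  : Prop :=
  exists nu1 nu2 : R, principal_normal_curvatures z e1 e2 u v nu1 nu2 /\
    nu2 = - nu1 /\ nu1 <> 0.

(** Normal connection D^perp e1 = omega e2, D^perp e2 = - omega e1 with
    connection form omega(X) = <d_X e1, e2>.  Its curvature is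
    R^perp(z_u,z_v) e1 = (d_u omega(d_v) - d_v omega(d_u)) e2 ;
    flat normal connection means this vanishes identically. *)
Definition omega_u (e1 e2 : R -> R -> V4) u v := dot (Pu e1 u v) (e2 u v).
Definition omega_v (e1 e2 : R -> R -> V4) u v := dot (Pv e1 u v) (e2 u v).

Definition flat_normal_connection (D : R -> R -> Prop) (e1 e2 : R -> R -> V4)
  : Prop :=
  forall u v, D u v -> pu (omega_v e1 e2) u v - pv (omega_u e1 e2) u v = 0.

(* Main.v *)
Require Import Defs.
From Stdlib Require Import Reals Lra Lia List.
From Coquelicot Require Import Coquelicot.
Open Scope R_scope.
Definition upd (a : V4) (k : nat) (r : R) : V4 := fun i => if Nat.eqb i k then r else a i.

Lemma dot_comm a b : dot a b = dot b a.
Proof. unfold dot; ring. Qed.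

Lemma cramer (a b c d x : V4) k : (k < 4)%nat ->
  dot a x = 0 -> dot b x = 0 -> dot c x = 0 -> dot d x = 0 ->
  det4 a b c d * x k = 0.
Proof.
  intros Hk H1 H2 H3 H4.
  assert (E : det4 a b c d * x k =
    det4 (upd a k (dot a x)) (upd b k (dot b x)) (upd c k (dot c x)) (upd d k (dot d x))).
  { destruct k as [|[|[|[|k]]]]; try lia; unfold det4, m2, upd, dot; simpl; ring. }
  rewrite E, H1, H2, H3, H4.
  destruct k as [|[|[|[|k]]]]; try lia; unfold det4, m2, upd; simpl; ring.
Qed.

Lemma alg1 E F G p q : E*G - F^2 <> 0 ->
  p - (G*p - F*q)/(E*G-F^2)*E - (E*q-F*p)/(E*G-F^2)*F = 0.
Proof. intros; field; auto. Qed.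
Lemma alg2 E F G p q : E*G - F^2 <> 0 ->
  q - (G*p - F*q)/(E*G-F^2)*F - (E*q-F*p)/(E*G-F^2)*G = 0.
Proof. intros; field; auto. Qed.

Lemma decomp (Zu Zv N1 N2 a b : V4) :
  dot N1 N1 = 1 -> dot N2 N2 = 1 -> dot N1 N2 = 0 -> dot N1 Zu = 0 ->
  dot N1 Zv = 0 -> dot N2 Zu = 0 -> dot N2 Zv = 0 ->
  det4 Zu Zv N1 N2 <> 0 ->
  dot Zu Zu * dot Zv Zv - dot Zu Zv ^ 2 <> 0 ->
  dot a b =
    ((dot Zv Zv * dot a Zu - dot Zu Zv * dot a Zv) /
       (dot Zu Zu * dot Zv Zv - dot Zu Zv ^ 2)) * dot Zu b
  + ((dot Zu Zu * dot a Zv - dot Zu Zv * dot a Zu) /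
       (dot Zu Zu * dot Zv Zv - dot Zu Zv ^ 2)) * dot Zv b
  + dot a N1 * dot N1 b + dot a N2 * dot N2 b.
Proof.
  intros h1 h2 h3 h4 h5 h6 h7 hdet hD.
  pose proof (alg1 (dot Zu Zu) (dot Zu Zv) (dot Zv Zv) (dot a Zu) (dot a Zv) hD) as A1.
  pose proof (alg2 (dot Zu Zu) (dot Zu Zv) (dot Zv Zv) (dot a Zu) (dot a Zv) hD) as A2.
  remember ((dot Zv Zv * dot a Zu - dot Zu Zv * dot a Zv) /
       (dot Zu Zu * dot Zv Zv - dot Zu Zv ^ 2)) as al.
  remember ((dot Zu Zu * dot a Zv - dot Zu Zv * dot a Zu) /
       (dot Zu Zu * dot Zv Zv - dot Zu Zv ^ 2)) as be.
  remember (dot a N1) as s. remember (dot a N2) as t.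
  pose (x := fun i => a i - al * Zu i - be * Zv i - s * N1 i - t * N2 i).
  assert (Hx : forall w : V4, dot w x = dot w a - al * dot w Zu - be * dot w Zv
                 - s * dot w N1 - t * dot w N2) by (intro w; unfold x, dot; ring).
  assert (X1 : dot Zu x = 0).
  { rewrite Hx. rewrite (dot_comm Zu a), (dot_comm Zu N1), (dot_comm Zu N2), h4, h6.
    lra. }
  assert (X2 : dot Zv x = 0).
  { rewrite Hx. rewrite (dot_comm Zv a), (dot_comm Zv N1), (dot_comm Zv N2), h5, h7,
     (dot_comm Zv Zu). lra. }
  assert (X3 : dot N1 x = 0).
  { rewrite Hx, h1, h3, h4, h5, (dot_comm N1 a), <- Heqs. ring. }
  assert (X4 : dot N2 x = 0).
  { rewrite Hx, h2, (dot_comm N2 N1), h3, h6, h7, (dot_comm N2 a), <- Heqt. ring. }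
  assert (Z : forall k, (k < 4)%nat -> x k = 0).
  { intros k Hk. pose proof (cramer Zu Zv N1 N2 x k Hk X1 X2 X3 X4) as C.
    destruct (Rmult_integral _ _ C) as [C'|C']; [contradiction|exact C']. }
  assert (Hxb : dot x b = 0).
  { unfold dot. rewrite (Z 0%nat), (Z 1%nat), (Z 2%nat), (Z 3%nat) by lia. ring. }
  rewrite (dot_comm N1 b), (dot_comm N2 b).
  transitivity (dot x b + al * dot Zu b + be * dot Zv b + s * dot b N1 + t * dot b N2).
  { unfold x, dot. ring. }
  rewrite Hxb. ring.
Qed.

Lemma open_loc2d D u v : open_dom D -> D u v -> locally_2d D u v.
Proof.
  intros HD H. destruct (HD (u,v) H) as [eps He]. exists eps.
  intros a b Ha Hb. apply (He (a,b)). split; assumption.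
Qed.

Lemma schw D f u v : open_dom D -> smooth D f -> D u v -> pu (pv f) u v = pv (pu f) u v.
Proof.
  intros HD Hf H. unfold pu, pv. apply Schwarz.
  - destruct (open_loc2d D u v HD H) as [d Hd]; exists d; intros a b Ha Hb.
    specialize (Hd a b Ha Hb).
    destruct (Hf nil a b Hd) as [h1 [h2 _]].
    destruct (Hf (false::nil) a b Hd) as [h3 _].
    destruct (Hf (true::nil) a b Hd) as [_ [h4 _]].
    simpl in *. unfold pu, pv in *. tauto.
  - apply continuity_2d_pt_filterlim.
    destruct (Hf (true::false::nil) u v H) as [_ [_ Hc]]. exact Hc.
  - apply continuity_2d_pt_filterlim.
    destruct (Hf (false::true::nil) u v H) as [_ [_ Hc]]. exact Hc.
Qed.

Lemma pu_const D f c u v : open_dom D -> D u v -> (forall x y, D x y -> f x y = c) ->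
  pu f u v = 0.
Proof.
  intros HD H Hf. unfold pu. rewrite (Derive_ext_loc _ (fun _ => c)).
  apply Derive_const.
  destruct (open_loc2d D u v HD H) as [d Hd]. exists d. intros t Ht. apply Hf.
  apply Hd. exact Ht. rewrite Rminus_eq_0, Rabs_R0. apply cond_pos.
Qed.

Lemma pv_const D f c u v : open_dom D -> D u v -> (forall x y, D x y -> f x y = c) ->
  pv f u v = 0.
Proof.
  intros HD H Hf. unfold pv. rewrite (Derive_ext_loc _ (fun _ => c)).
  apply Derive_const.
  destruct (open_loc2d D u v HD H) as [d Hd]. exists d. intros t Ht. apply Hf.
  apply Hd. rewrite Rminus_eq_0, Rabs_R0. apply cond_pos. exact Ht.
Qed.

Lemma D4 (f : R -> nat -> R) (x : R) :
  (forall i, (i < 4)%nat -> ex_derive (fun t => f t i) x) ->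
  forall g : R -> nat -> R,
  (forall i, (i < 4)%nat -> ex_derive (fun t => g t i) x) ->
  Derive (fun t => dot (f t) (g t)) x =
  dot (fun i => Derive (fun t => f t i) x) (g x) +
  dot (f x) (fun i => Derive (fun t => g t i) x).
Proof.
  intros Hf g Hg.
  assert (M : forall i, (i < 4)%nat ->
     ex_derive (fun t => f t i * g t i) x /\
     Derive (fun t => f t i * g t i) x =
     Derive (fun t => f t i) x * g x i + f x i * Derive (fun t => g t i) x).
  { intros i Hi. split. apply ex_derive_mult; auto. apply Derive_mult; auto. }
  destruct (M 0%nat ltac:(lia)) as [e0 d0]. destruct (M 1%nat ltac:(lia)) as [e1 d1].
  destruct (M 2%nat ltac:(lia)) as [e2 d2]. destruct (M 3%nat ltac:(lia)) as [e3 d3].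
  set (a0 := fun t => f t 0%nat * g t 0%nat) in *.
  set (a1 := fun t => f t 1%nat * g t 1%nat) in *.
  set (a2 := fun t => f t 2%nat * g t 2%nat) in *.
  set (a3 := fun t => f t 3%nat * g t 3%nat) in *.
  rewrite (Derive_ext _ (fun t => (a0 t + a1 t + a2 t) + a3 t)) by reflexivity.
  rewrite (Derive_plus (fun t => a0 t + a1 t + a2 t) a3).
  2: { exact (ex_derive_plus (fun t => a0 t + a1 t) a2 x (ex_derive_plus a0 a1 x e0 e1) e2). }
  2: assumption.
  rewrite (Derive_plus (fun t => a0 t + a1 t) a2).
  2: { exact (ex_derive_plus a0 a1 x e0 e1). }
  2: assumption.
  rewrite (Derive_plus a0 a1) by assumption.
  rewrite d0, d1, d2, d3. unfold dot. ring.
Qed.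

Lemma pu_dot a b u v :
  (forall i, (i < 4)%nat -> ex_derive (fun t => a t v i) u) ->
  (forall i, (i < 4)%nat -> ex_derive (fun t => b t v i) u) ->
  pu (fun x y => dot (a x y) (b x y)) u v = dot (Pu a u v) (b u v) + dot (a u v) (Pu b u v).
Proof.
  intros Ha Hb. unfold pu.
  exact (D4 (fun t => a t v) u Ha (fun t => b t v) Hb).
Qed.

Lemma pv_dot a b u v :
  (forall i, (i < 4)%nat -> ex_derive (fun t => a u t i) v) ->
  (forall i, (i < 4)%nat -> ex_derive (fun t => b u t i) v) ->
  pv (fun x y => dot (a x y) (b x y)) u v = dot (Pv a u v) (b u v) + dot (a u v) (Pv b u v).
Proof.
  intros Ha Hb. unfold pv.
  exact (D4 (fun t => a u t) v Ha (fun t => b u t) Hb).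
Qed.

Lemma exU D z l u v : smoothV D z -> D u v -> forall i, (i<4)%nat ->
  ex_derive (fun t => dpart l (fun a b => z a b i) t v) u.
Proof. intros Hz H i Hi. exact (proj1 (Hz i Hi l u v H)). Qed.
Lemma exV D z l u v : smoothV D z -> D u v -> forall i, (i<4)%nat ->
  ex_derive (fun t => dpart l (fun a b => z a b i) u t) v.
Proof. intros Hz H i Hi. exact (proj1 (proj2 (Hz i Hi l u v H))). Qed.

Lemma pu_rel D a b c u v : open_dom D -> D u v ->
  (forall x y, D x y -> dot (a x y) (b x y) = c) ->
  (forall i, (i < 4)%nat -> ex_derive (fun t => a t v i) u) ->
  (forall i, (i < 4)%nat -> ex_derive (fun t => b t v i) u) ->
  dot (Pu a u v) (b u v) + dot (a u v) (Pu b u v) = 0.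
Proof.
  intros HD H Hc Ha Hb. rewrite <- pu_dot by assumption.
  exact (pu_const D _ c u v HD H Hc).
Qed.
Lemma pv_rel D a b c u v : open_dom D -> D u v ->
  (forall x y, D x y -> dot (a x y) (b x y) = c) ->
  (forall i, (i < 4)%nat -> ex_derive (fun t => a u t i) v) ->
  (forall i, (i < 4)%nat -> ex_derive (fun t => b u t i) v) ->
  dot (Pv a u v) (b u v) + dot (a u v) (Pv b u v) = 0.
Proof.
  intros HD H Hc Ha Hb. rewrite <- pv_dot by assumption.
  exact (pv_const D _ c u v HD H Hc).
Qed.

Lemma dot_ext4 a b c : (forall i, (i < 4)%nat -> a i = b i) -> dot a c = dot b c.
Proof. intros h. unfold dot. rewrite !h by lia. reflexivity. Qed.

Lemma schwV D z u v : open_dom D -> smoothV D z -> D u v ->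
  forall i, (i < 4)%nat -> Pu (Pv z) u v i = Pv (Pu z) u v i.
Proof. intros HD Hz H i Hi. unfold Pu, Pv. exact (schw D (fun a b => z a b i) u v HD (Hz i Hi) H). Qed.

Lemma ricci D z e1 e2 u v : open_dom D -> smoothV D z -> smoothV D e1 -> smoothV D e2 ->
  regular D z -> normal_frame D z e1 e2 -> D u v ->
  pu (omega_v e1 e2) u v - pv (omega_u e1 e2) u v =
  - (EE z u v * NN z e1 e2 u v + GG z u v * LL z e1 e2 u v
     - 2 * FF z u v * MM z e1 e2 u v) / (2 * WW z u v).
Proof.
  intros HD Hz He1 He2 Hreg Hfr H.
  assert (Fr : forall x y, D x y ->
    dot (e1 x y) (e1 x y) = 1 /\ dot (e2 x y) (e2 x y) = 1 /\
    dot (e1 x y) (e2 x y) = 0 /\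
    dot (e1 x y) (Pu z x y) = 0 /\ dot (e1 x y) (Pv z x y) = 0 /\
    dot (e2 x y) (Pu z x y) = 0 /\ dot (e2 x y) (Pv z x y) = 0) by
    (intros x y Hxy; destruct (Hfr x y Hxy) as (?&?&?&?&?&?&?&?); tauto).
  destruct (Hfr u v H) as (f1&f2&f3&f4&f5&f6&f7&f8).
  pose proof (Hreg u v H) as Hr. unfold EE, FF, GG in Hr.
  pose proof (exU D z nil u v Hz H) as zu0. pose proof (exV D z nil u v Hz H) as zv0.
  pose proof (exU D e1 nil u v He1 H) as e1u0. pose proof (exV D e1 nil u v He1 H) as e1v0.
  pose proof (exU D e2 nil u v He2 H) as e2u0. pose proof (exV D e2 nil u v He2 H) as e2v0.
  pose proof (exU D z (true::nil) u v Hz H) as zuU. pose proof (exV D z (true::nil) u v Hz H) as zuV.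
  pose proof (exU D z (false::nil) u v Hz H) as zvU. pose proof (exV D z (false::nil) u v Hz H) as zvV.
  pose proof (exU D e1 (false::nil) u v He1 H) as e1vU.
  pose proof (exV D e1 (true::nil) u v He1 H) as e1uV.
  simpl in *.
  unfold omega_v, omega_u.
  rewrite (pu_dot (Pv e1) e2 u v) by assumption.
  rewrite (pv_dot (Pu e1) e2 u v) by assumption.
  rewrite (dot_ext4 _ _ (e2 u v) (schwV D e1 u v HD He1 H)).
  assert (R1u := pu_rel D e1 e1 1 u v HD H (fun x y h => proj1 (Fr x y h)) e1u0 e1u0).
  assert (R1v := pv_rel D e1 e1 1 u v HD H (fun x y h => proj1 (Fr x y h)) e1v0 e1v0).
  assert (R2u := pu_rel D e2 e2 1 u v HD H (fun x y h => proj1 (proj2 (Fr x y h))) e2u0 e2u0).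
  assert (R2v := pv_rel D e2 e2 1 u v HD H (fun x y h => proj1 (proj2 (Fr x y h))) e2v0 e2v0).
  assert (T1uu := pu_rel D e1 (Pu z) 0 u v HD H (fun x y h => proj1 (proj2 (proj2 (proj2 (Fr x y h))))) e1u0 zuU).
  assert (T1uv := pu_rel D e1 (Pv z) 0 u v HD H (fun x y h => proj1 (proj2 (proj2 (proj2 (proj2 (Fr x y h)))))) e1u0 zvU).
  assert (T1vu := pv_rel D e1 (Pu z) 0 u v HD H (fun x y h => proj1 (proj2 (proj2 (proj2 (Fr x y h))))) e1v0 zuV).
  assert (T1vv := pv_rel D e1 (Pv z) 0 u v HD H (fun x y h => proj1 (proj2 (proj2 (proj2 (proj2 (Fr x y h)))))) e1v0 zvV).
  assert (T2uu := pu_rel D e2 (Pu z) 0 u v HD H (fun x y h => proj1 (proj2 (proj2 (proj2 (proj2 (proj2 (Fr x y h))))))) e2u0 zuU).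
  assert (T2uv := pu_rel D e2 (Pv z) 0 u v HD H (fun x y h => proj2 (proj2 (proj2 (proj2 (proj2 (proj2 (Fr x y h))))))) e2u0 zvU).
  assert (T2vu := pv_rel D e2 (Pu z) 0 u v HD H (fun x y h => proj1 (proj2 (proj2 (proj2 (proj2 (proj2 (Fr x y h))))))) e2v0 zuV).
  assert (T2vv := pv_rel D e2 (Pv z) 0 u v HD H (fun x y h => proj2 (proj2 (proj2 (proj2 (proj2 (proj2 (Fr x y h))))))) e2v0 zvV).
  rewrite (dot_comm (e1 u v) (Pu (Pv z) u v)), (dot_ext4 _ _ (e1 u v) (schwV D z u v HD Hz H)) in T1uv.
  rewrite (dot_comm (e2 u v) (Pu (Pv z) u v)), (dot_ext4 _ _ (e2 u v) (schwV D z u v HD Hz H)) in T2uv.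
  assert (Hdet : det4 (Pu z u v) (Pv z u v) (e1 u v) (e2 u v) <> 0) by lra.
  assert (HD0 : dot (Pu z u v) (Pu z u v) * dot (Pv z u v) (Pv z u v) - dot (Pu z u v) (Pv z u v) ^ 2 <> 0) by lra.
  rewrite (decomp (Pu z u v) (Pv z u v) (e1 u v) (e2 u v) (Pv e1 u v) (Pu e2 u v)) by assumption.
  rewrite (decomp (Pu z u v) (Pv z u v) (e1 u v) (e2 u v) (Pu e1 u v) (Pv e2 u v)) by assumption.
  rewrite (dot_comm (e1 u v) (Pu e1 u v)) in R1u.
  rewrite (dot_comm (e1 u v) (Pv e1 u v)) in R1v.
  rewrite (dot_comm (e2 u v) (Pu e2 u v)) in R2u.
  rewrite (dot_comm (e2 u v) (Pv e2 u v)) in R2v.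
  assert (Q1 : dot (Pu e1 u v) (e1 u v) = 0) by lra.
  assert (Q2 : dot (Pv e1 u v) (e1 u v) = 0) by lra.
  assert (Q3 : dot (e2 u v) (Pu e2 u v) = 0) by (rewrite dot_comm; lra).
  assert (Q4 : dot (e2 u v) (Pv e2 u v) = 0) by (rewrite dot_comm; lra).
  rewrite Q1, Q2, Q3, Q4.
  rewrite (dot_comm (e1 u v)) in T1uu, T1vu, T1vv.
  rewrite (dot_comm (e2 u v)) in T2uu, T2vu, T2vv.
  rewrite (dot_comm (Pu z u v) (Pu e2 u v)), (dot_comm (Pv z u v) (Pu e2 u v)),
    (dot_comm (Pu z u v) (Pv e2 u v)), (dot_comm (Pv z u v) (Pv e2 u v)).
  assert (S1 : dot (Pu e1 u v) (Pu z u v) = - c11 z e1 u v) by (unfold c11; lra).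
  assert (S2 : dot (Pu e1 u v) (Pv z u v) = - c12 z e1 u v) by (unfold c12; lra).
  assert (S3 : dot (Pv e1 u v) (Pu z u v) = - c12 z e1 u v) by (unfold c12; lra).
  assert (S4 : dot (Pv e1 u v) (Pv z u v) = - c22 z e1 u v) by (unfold c22; lra).
  assert (S5 : dot (Pu e2 u v) (Pu z u v) = - c11 z e2 u v) by (unfold c11; lra).
  assert (S6 : dot (Pu e2 u v) (Pv z u v) = - c12 z e2 u v) by (unfold c12; lra).
  assert (S7 : dot (Pv e2 u v) (Pu z u v) = - c12 z e2 u v) by (unfold c12; lra).
  assert (S8 : dot (Pv e2 u v) (Pv z u v) = - c22 z e2 u v) by (unfold c22; lra).
  rewrite S1, S2, S3, S4, S5, S6, S7, S8.
  unfold LL, MM, NN, EE, FF, GG, WW.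
  assert (HW := sqrt_sqrt _ (Rlt_le _ _ Hr)).
  assert (HW0 := sqrt_lt_R0 _ Hr).
  set (W := sqrt _) in *.
  set (E := dot (Pu z u v) (Pu z u v)) in *.
  set (F := dot (Pu z u v) (Pv z u v)) in *.
  set (G := dot (Pv z u v) (Pv z u v)) in *.
  replace (E * G - F ^ 2) with (W * W) by (rewrite HW; ring). field. lra.
Qed.

Lemma pow2_gt_0 x : x <> 0 -> x ^ 2 > 0.
Proof. intros h. replace (x^2) with (Rsqr x) by (unfold Rsqr; ring). apply Rsqr_pos_lt; auto. Qed.

Lemma neg_disc E F G L M N : E*G - F^2 > 0 -> 0 <= E -> ~(L=0/\M=0/\N=0) ->
  E*N + G*L - 2*F*M = 0 -> L*N - M^2 < 0.
Proof.
  intros HD HE Hn HT.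
  assert (HE' : E > 0).
  { destruct (Req_dec E 0) as [h|h]; [subst; nra|lra]. }
  assert (HEN : E*N = 2*F*M - G*L) by lra.
  assert (K : E^2 * (L*N - M^2) = -((E*M - F*L)^2 + (E*G-F^2)*L^2)).
  { transitivity (E*L*(E*N) - E^2*M^2); [ring|]. rewrite HEN. ring. }
  assert (S : (E*M - F*L)^2 + (E*G-F^2)*L^2 > 0).
  { destruct (Req_dec L 0) as [hL|hL].
    - subst L. destruct (Req_dec M 0) as [hM|hM].
      + subst M. exfalso. apply Hn. repeat split; try reflexivity.
        assert (E*N = 0) by lra. destruct (Rmult_integral _ _ H); lra.
      + assert (E*M <> 0) by (apply Rmult_integral_contrapositive; split; lra).
        assert ((E*M - F*0)^2 > 0) by (replace (E*M - F*0) with (E*M) by ring; apply pow2_gt_0; auto).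
        replace ((E*M - F*0)^2 + (E*G-F^2)*0^2) with ((E*M-F*0)^2) by ring; assumption.
    - assert (L^2 > 0) by (apply pow2_gt_0; auto).
      assert (0 <= (E*M-F*L)^2) by (apply pow2_ge_0).
      assert ((E*G-F^2)*L^2 > 0) by (apply Rmult_lt_0_compat; lra). lra. }
  assert (E^2 > 0) by (apply pow2_gt_0; lra). nra.
Qed.

Lemma alg_point E F G L M N : E*G - F^2 > 0 -> 0 <= E -> ~(L=0/\M=0/\N=0) ->
 (E*N + G*L - 2*F*M = 0 <-> exists nu1 nu2 : R,
   (forall nu, (E*G-F^2)*nu^2 - (E*N+G*L-2*F*M)*nu + (L*N-M^2)
               = (E*G-F^2)*(nu-nu1)*(nu-nu2)) /\ nu2 = -nu1 /\ nu1 <> 0).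
Proof.
  intros HD HE Hn. split.
  - intros HT. pose proof (neg_disc E F G L M N HD HE Hn HT) as Hneg.
    assert (Hq : 0 < -(L*N-M^2)/(E*G-F^2)).
    { apply Rdiv_lt_0_compat; lra. }
    exists (sqrt (-(L*N-M^2)/(E*G-F^2))), (- sqrt (-(L*N-M^2)/(E*G-F^2))).
    split; [|split; [reflexivity|]].
    + intro nu. pose proof (sqrt_sqrt _ (Rlt_le _ _ Hq)) as Hs.
      set (s := sqrt _) in *. rewrite HT.
      replace ((E*G-F^2)*(nu-s)*(nu - -s)) with ((E*G-F^2)*nu^2 - (E*G-F^2)*(s*s)) by ring.
      rewrite Hs. field. lra.
    + pose proof (sqrt_lt_R0 _ Hq). lra.
  - intros (n1 & n2 & Hp & H2 & _). subst n2.
    pose proof (Hp 1) as A. pose proof (Hp (-1)) as B. nra.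
Qed.

Lemma point_iff D z e1 e2 u v : open_dom D -> smoothV D z -> smoothV D e1 -> smoothV D e2 ->
  regular D z -> normal_frame D z e1 e2 -> free_of_flat_points D z e1 e2 -> D u v ->
  (pu (omega_v e1 e2) u v - pv (omega_u e1 e2) u v = 0 <->
   indicatrix_rectangular_hyperbola z e1 e2 u v).
Proof.
  intros HD Hz He1 He2 Hreg Hfr Hnf H.
  rewrite (ricci D z e1 e2 u v HD Hz He1 He2 Hreg Hfr H).
  pose proof (Hreg u v H) as Hr.
  assert (HE : 0 <= EE z u v) by (unfold EE, dot; nra).
  pose proof (alg_point (EE z u v) (FF z u v) (GG z u v) (LL z e1 e2 u v) (MM z e1 e2 u v)
     (NN z e1 e2 u v) Hr HE (Hnf u v H)) as A.
  assert (HW : 0 < WW z u v) by (apply sqrt_lt_R0; exact Hr).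
  rewrite <- A. split; intro h.
  - set (T := EE z u v * NN z e1 e2 u v + GG z u v * LL z e1 e2 u v - 2 * FF z u v * MM z e1 e2 u v) in *.
    assert (T = - (- T / (2 * WW z u v)) * (2 * WW z u v)) by (field; lra).
    rewrite h in H0. lra.
  - set (T := EE z u v * NN z e1 e2 u v + GG z u v * LL z e1 e2 u v - 2 * FF z u v * MM z e1 e2 u v) in *.
    rewrite h. field. lra.
Qed.

Theorem proposition3p4 (D : R -> R -> Prop) (z e1 e2 : R -> R -> V4)
  (HD : open_dom D)
  (Hz : smoothV D z) (He1 : smoothV D e1) (He2 : smoothV D e2)
  (Hreg : regular D z)
  (Hframe : normal_frame D z e1 e2)
  (Hnoflat : free_of_flat_points D z e1 e2) :
  flat_normal_connection D e1 e2 <->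
  (forall u v : R, D u v -> indicatrix_rectangular_hyperbola z e1 e2 u v).
Proof.
  unfold flat_normal_connection. split.
  - intros h u v H. apply (point_iff D z e1 e2 u v); auto.
  - intros h u v H. apply (point_iff D z e1 e2 u v); auto.
Qed.
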